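(* Let $a>0$ and let $Y^{(1)},Y^{(2)}$ be independent $\chi^2_1$ random variables. Then the cdf $H(u)=P(Y^{(1)}+aY^{(2)}\le u)$ is concave on $(0,\infty)$. *)

(* Defs.v *)
From Stdlib Require Import Reals ClassicalEpsilon.
Open Scope R_scope.

(* Riemann integral of f over [a,b] (oriented), defined to be 0 when f is not
   Riemann integrable there.  RiemannInt is proof-irrelevant, so the choice of
   integrability witness does not matter. *)
Definition RInt (f : R -> R) (a b : R) : R :=
  match excluded_middle_informative
          (exists pr : Riemann_integrable f a b, True) with
  | left H => RiemannInt (proj1_sig (constructive_indefinite_description _ H))
  | right _ => 0
  end.

Definition phi (z : R) : R := exp (- (z ^ 2) / 2) / sqrt (2 * PI).

(* cdf of a chi^2_1 variable Y = Z^2, Z standard normal: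
   P(Y <= v) = P(-sqrt v <= Z <= sqrt v)  (= 0 for v <= 0 since sqrt v = 0). *)
Definition chi1_cdf (v : R) : R := RInt phi (- sqrt v) (sqrt v).

(* cdf of Y1 + a Y2, Y1 = Z1^2, Y2 = Z2^2 independent chi^2_1, a > 0:
   H(u) = E[ P(Z1^2 <= u - a Z2^2 | Z2) ]
        = int_{-sqrt(u/a)}^{sqrt(u/a)} phi(z) * chi1_cdf(u - a z^2) dz
   (outside that interval the integrand vanishes). *)
Definition H_cdf (a u : R) : R :=
  RInt (fun z => phi z * chi1_cdf (u - a * z ^ 2)) (- sqrt (u / a)) (sqrt (u / a)).

(* Main.v *)
Require Import Defs.
From Stdlib Require Import Reals.
Open Scope R_scope.
From Stdlib Require Import Reals Lra FunctionalExtensionality ClassicalEpsilon.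
From Coquelicot Require Import Coquelicot.
Open Scope R_scope.

Lemma cont_pt (f : R -> R) x : continuous f x -> continuity_pt f x.
Proof. intro H. apply continuity_pt_filterlim. exact H. Qed.

Lemma DR (f : R -> R) a b : ex_RInt f a b -> Defs.RInt f a b = RInt f a b.
Proof.
  intro H. unfold Defs.RInt.
  destruct excluded_middle_informative as [e|n].
  - symmetry. apply RInt_Reals.
  - exfalso. apply n. exists (ex_RInt_Reals_0 _ _ _ H). exact I.
Qed.

Lemma phi_deriv x : is_derive phi x (- x * phi x).
Proof.
  unfold phi. auto_derive; [auto|].
  replace (- (x * (x * 1)) * / 2) with (- x ^ 2 / 2) by (unfold Rdiv; ring).
  replace (- (1 * ((1 + 1) * (x * 1))) * / 2) with (-x) by field.
  unfold Rdiv; ring.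
Qed.

Lemma phi_cont x : continuous phi x.
Proof. apply (ex_derive_continuous (K:=R_AbsRing) (V:=R_NormedModule)). eexists. apply phi_deriv. Qed.

Lemma phi_int a b : ex_RInt phi a b.
Proof. apply (ex_RInt_continuous (V:=R_CompleteNormedModule)). intros; apply phi_cont. Qed.

Lemma phi_even x : phi (- x) = phi x.
Proof. unfold phi. replace ((-x)^2) with (x^2) by ring. reflexivity. Qed.

Definition I0 (x : R) : R := RInt phi 0 x.

Lemma I0_deriv x : is_derive I0 x (phi x).
Proof.
  apply (is_derive_RInt phi I0 0 x).
  - apply filter_forall. intro b. apply (RInt_correct (V:=R_CompleteNormedModule)). apply phi_int.
  - apply phi_cont.
Qed.

Lemma DI0 y : Derive (fun x => I0 x) y = phi y.
Proof. apply is_derive_unique. apply I0_deriv. Qed.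

Definition E (r : R) : R := RInt phi (-r) r.

Lemma E_eq r : E r = I0 r - I0 (- r).
Proof.
  unfold E, I0. rewrite <- (RInt_Chasles phi (-r) 0 r) by apply phi_int.
  rewrite <- (opp_RInt_swap phi 0 (-r)) by apply phi_int.
  unfold plus, opp; simpl. ring.
Qed.

Lemma E_deriv r : is_derive E r (2 * phi r).
Proof.
  apply is_derive_ext with (f := fun r => I0 r - I0 (- r)).
  { intro t; symmetry; apply E_eq. }
  auto_derive.
  - split; [|split; [|exact I]]; eexists; apply I0_deriv.
  - rewrite !DI0, phi_even. ring.
Qed.

Lemma Dphi y : Derive (fun x => phi x) y = - y * phi y.
Proof. apply is_derive_unique. apply phi_deriv. Qed.
Lemma DE y : Derive (fun x => E x) y = 2 * phi y.
Proof. apply is_derive_unique. apply E_deriv. Qed.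
Lemma E_cont x : continuous E x.
Proof. apply (ex_derive_continuous (K:=R_AbsRing) (V:=R_NormedModule)). eexists. apply E_deriv. Qed.
Lemma E0 : E 0 = 0.
Proof. unfold E. rewrite Ropp_0. apply (RInt_point (V:=R_CompleteNormedModule)). Qed.

Lemma c2_1 f x y : continuity_2d_pt f x y -> continuity_pt (fun t => f x t) y.
Proof.
  intro H. unfold continuity_pt, continue_in, limit1_in, limit_in. simpl.
  unfold R_dist. intros eps Heps.
  destruct (H (mkposreal eps Heps)) as [d Hd].
  exists d. split; [apply cond_pos|]. intros t [_ Ht].
  apply (Hd x t). rewrite Rminus_eq_0, Rabs_R0. apply cond_pos. exact Ht.
Qed.

Lemma cpt_phi x : continuity_pt phi x. Proof. apply cont_pt, phi_cont. Qed.
Lemma cpt_E x : continuity_pt E x. Proof. apply cont_pt, E_cont. Qed.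
Lemma cpt_sin x : continuity_pt sin x. Proof. apply continuity_sin. Qed.
Lemma cpt_cos x : continuity_pt cos x. Proof. apply continuity_cos. Qed.

Ltac c2 := repeat first
  [ apply continuity_2d_pt_id1 | apply continuity_2d_pt_id2 | apply continuity_2d_pt_const
  | apply continuity_1d_2d_pt_comp; [first [apply cpt_phi | apply cpt_E | apply cpt_sin | apply cpt_cos] |]
  | apply continuity_2d_pt_mult | apply continuity_2d_pt_plus | apply continuity_2d_pt_opp ].

Definition g k r t := r * k * cos t * phi (r * k * sin t) * E (r * cos t).
Definition dg k r t := k * cos t * phi (r * k * sin t) * (1 - (r * k * sin t) * (r * k * sin t)) * E (r * cos t)
   + 2 * r * k * (cos t * cos t) * phi (r * k * sin t) * phi (r * cos t).
Definition Rf k r t := k * sin t * phi (r * k * sin t) * E (r * cos t).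
Definition dR k r t := k * cos t * phi (r * k * sin t) * (1 - (r * k * sin t) * (r * k * sin t)) * E (r * cos t)
   - 2 * r * k * (sin t * sin t) * phi (r * k * sin t) * phi (r * cos t).
Definition dd k r t := 2 * r * (k * phi (r * k * sin t) * phi (r * cos t)).

Lemma g_deriv k r t : is_derive (fun r => g k r t) r (dg k r t).
Proof.
  unfold g, dg. auto_derive.
  - repeat split; eexists; first [apply phi_deriv | apply E_deriv].
  - rewrite !Dphi, !DE. ring.
Qed.

Lemma Rf_deriv k r t : is_derive (fun t => Rf k r t) t (dR k r t).
Proof.
  unfold Rf, dR. auto_derive.
  - repeat split; eexists; first [apply phi_deriv | apply E_deriv].
  - rewrite !Dphi, !DE. ring.
Qed.

Lemma dg_split k r t : dg k r t = dR k r t + dd k r t.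
Proof.
  unfold dg, dR, dd. assert (H := sin2_cos2 t). unfold Rsqr in H.
  replace (cos t * cos t) with (1 - sin t * sin t) by lra. ring.
Qed.

Lemma dg_c2 k r t : continuity_2d_pt (dg k) r t.
Proof. unfold dg, Rminus. c2. Qed.
Lemma dR_c2 k r t : continuity_2d_pt (dR k) r t.
Proof. unfold dR, Rminus. c2. Qed.
Lemma dd_c2 k r t : continuity_2d_pt (dd k) r t.
Proof. unfold dd. c2. Qed.
Lemma g_c2 k r t : continuity_2d_pt (g k) r t.
Proof. unfold g. c2. Qed.

Lemma cont_of_c2 f x y : continuity_2d_pt f x y -> continuous (fun t => f x t) y.
Proof. intro H. apply continuity_pt_filterlim. apply c2_1. exact H. Qed.

Definition K k r := RInt (fun t => g k r t) (-(PI/2)) (PI/2).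
Definition Kd k r := RInt (fun t => k * phi (r * k * sin t) * phi (r * cos t)) (-(PI/2)) (PI/2).

Lemma Kd_int k r : ex_RInt (fun t => k * phi (r * k * sin t) * phi (r * cos t)) (-(PI/2)) (PI/2).
Proof.
  apply (ex_RInt_continuous (V:=R_CompleteNormedModule)). intros z _.
  apply (cont_of_c2 (fun r t => k * phi (r * k * sin t) * phi (r * cos t))). c2.
Qed.

Lemma K_deriv k r : is_derive (K k) r (2 * r * Kd k r).
Proof.
  assert (H := is_derive_RInt_param (fun u t => g k u t) (-(PI/2)) (PI/2) r).
  replace (2 * r * Kd k r) with
    (RInt (fun t : R => Derive (fun u : R => g k u t) r) (-(PI/2)) (PI/2)).
  - apply H.
    + apply filter_forall. intros x t _. eexists. apply g_deriv.
    + intros t _. apply continuity_2d_pt_ext with (f := dg k).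
      * intros x y. symmetry. apply is_derive_unique. apply g_deriv.
      * apply dg_c2.
    + apply filter_forall. intro y.
      apply (ex_RInt_continuous (V:=R_CompleteNormedModule)). intros z _.
      apply (cont_of_c2 (g k)). apply g_c2.
  - rewrite (RInt_ext _ (fun t => plus (dR k r t) (dd k r t))).
    2:{ intros t _. transitivity (dg k r t); [apply is_derive_unique, g_deriv | apply dg_split]. }
    apply is_RInt_unique.
    replace (2 * r * Kd k r) with (plus (minus (Rf k r (PI/2)) (Rf k r (-(PI/2)))) (scal (2 * r) (Kd k r))).
    + apply (is_RInt_plus (V:=R_NormedModule)).
      * apply (is_RInt_derive (V:=R_CompleteNormedModule)).
        -- intros t _. apply Rf_deriv.
        -- intros t _. apply (cont_of_c2 (dR k)). apply dR_c2.
      * apply (is_RInt_scal (V:=R_NormedModule)). apply (RInt_correct (V:=R_CompleteNormedModule)). apply Kd_int.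
    + unfold Rf. rewrite cos_neg, cos_PI2, !Rmult_0_r, E0.
      unfold minus, scal; unfold plus, opp, mult; simpl. change (mult (2 * r) (Kd k r)) with (2 * r * Kd k r). ring.
Qed.

Lemma KS_deriv k u : 0 < u -> is_derive (fun u => K k (sqrt u)) u (Kd k (sqrt u)).
Proof.
  intro hu.
  assert (Hs : is_derive (fun x => sqrt x) u (/ (2 * sqrt u))).
  { auto_derive. exact hu. field. apply Rgt_not_eq, sqrt_lt_R0, hu. }
  assert (H := is_derive_comp (K k) (fun x => sqrt x) u _ _ (K_deriv k (sqrt u)) Hs).
  replace (Kd k (sqrt u)) with (scal (/ (2 * sqrt u)) (2 * sqrt u * Kd k (sqrt u))).
  exact H.
  unfold scal; simpl; unfold mult; simpl. field. apply Rgt_not_eq, sqrt_lt_R0, hu.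
Qed.

Lemma phi_ge0 x : 0 <= phi x.
Proof.
  unfold phi. apply Rle_mult_inv_pos. apply Rlt_le, exp_pos.
  apply sqrt_lt_R0. pose PI_RGT_0. lra.
Qed.

Lemma phi_mono p q : q ^ 2 <= p ^ 2 -> phi p <= phi q.
Proof.
  intro h. unfold phi. apply Rmult_le_compat_r.
  - apply Rlt_le, Rinv_0_lt_compat, sqrt_lt_R0. pose PI_RGT_0. lra.
  - destruct (Req_dec (q^2) (p^2)) as [e|n].
    + rewrite e. lra.
    + apply Rlt_le, exp_increasing. lra.
Qed.

Lemma sq_mono x y m : 0 < x -> x <= y -> (sqrt x * m) ^ 2 <= (sqrt y * m) ^ 2.
Proof.
  intros hx hxy. rewrite !Rpow_mult_distr, !pow2_sqrt by lra.
  apply Rmult_le_compat_r. apply pow2_ge_0. exact hxy.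
Qed.

Lemma Kd_mono k x y : 0 <= k -> 0 < x -> x <= y -> Kd k (sqrt y) <= Kd k (sqrt x).
Proof.
  intros hk hx hxy. unfold Kd. apply RInt_le.
  - pose PI_RGT_0. lra.
  - apply Kd_int.
  - apply Kd_int.
  - intros t _. apply Rmult_le_compat.
    + apply Rmult_le_pos; [exact hk|apply phi_ge0].
    + apply phi_ge0.
    + apply Rmult_le_compat_l; [exact hk|].
      rewrite !Rmult_assoc. apply phi_mono. apply sq_mono; assumption.
    + apply phi_mono. apply sq_mono; assumption.
Qed.

Lemma concave_aux (f df : R -> R) :
  (forall x, 0 < x -> is_derive f x (df x)) ->
  (forall x y, 0 < x -> x <= y -> df y <= df x) ->
  forall x y t, 0 < x -> x <= y -> 0 <= t <= 1 ->
    t * f x + (1 - t) * f y <= f (t * x + (1 - t) * y).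
Proof.
  intros Hd Hm x y t hx hxy ht.
  set (z := t * x + (1 - t) * y).
  assert (hxz : x <= z) by (unfold z; nra).
  assert (hzy : z <= y) by (unfold z; nra).
  assert (Hc : forall w, x <= w <= y -> continuity_pt f w).
  { intros w hw. apply cont_pt. apply (ex_derive_continuous (K:=R_AbsRing) (V:=R_NormedModule)).
    eexists. apply Hd. lra. }
  destruct (MVT_gen f x z df) as [c1 [hc1 e1]].
  { intros w hw. apply Hd. rewrite Rmin_left in hw by lra. lra. }
  { intros w hw. rewrite Rmin_left, Rmax_right in hw by lra. apply Hc. lra. }
  destruct (MVT_gen f z y df) as [c2 [hc2 e2]].
  { intros w hw. apply Hd. rewrite Rmin_left in hw by lra. lra. }
  { intros w hw. rewrite Rmin_left, Rmax_right in hw by lra. apply Hc. lra. }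
  rewrite Rmin_left, Rmax_right in hc1 by lra.
  rewrite Rmin_left, Rmax_right in hc2 by lra.
  assert (hm : df c2 <= df c1) by (apply Hm; lra).
  assert (Ez : z - x = (1 - t) * (y - x)) by (unfold z; ring).
  assert (Ez2 : y - z = t * (y - x)) by (unfold z; ring).
  rewrite Ez in e1. rewrite Ez2 in e2.
  assert (0 <= t * (1 - t) * (y - x)) by (apply Rmult_le_pos; nra).
  nra.
Qed.

Lemma concave (f df : R -> R) :
  (forall x, 0 < x -> is_derive f x (df x)) ->
  (forall x y, 0 < x -> x <= y -> df y <= df x) ->
  forall x y t, 0 < x -> 0 < y -> 0 <= t <= 1 ->
    t * f x + (1 - t) * f y <= f (t * x + (1 - t) * y).
Proof.
  intros Hd Hm x y t hx hy ht.
  destruct (Rle_dec x y) as [h|h].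
  - apply (concave_aux f df); auto.
  - assert (H := concave_aux f df Hd Hm y x (1 - t) hy ltac:(lra) ltac:(lra)).
    replace (1 - (1 - t)) with t in H by ring.
    replace (t * x + (1 - t) * y) with ((1 - t) * y + t * x) by ring. lra.
Qed.

Lemma chi1_eq v : chi1_cdf v = E (sqrt v).
Proof. unfold chi1_cdf, E. apply DR. apply phi_int. Qed.

Lemma cpt_sqrt x : continuity_pt sqrt x. Proof. apply cont_pt, continuous_sqrt. Qed.

Lemma H_eq a u : 0 < a -> 0 < u -> H_cdf a u = K (/ sqrt a) (sqrt u).
Proof.
  intros ha hu. unfold H_cdf.
  set (b := sqrt (u / a)).
  set (F := fun z => phi z * E (sqrt (u - a * (z * z)))).
  replace (fun z => phi z * chi1_cdf (u - a * z ^ 2)) with F.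
  2:{ apply functional_extensionality. intro z. unfold F. rewrite chi1_eq. f_equal. f_equal. f_equal. ring. }
  assert (HF : forall z, continuous F z).
  { intro z. apply (cont_of_c2 (fun _ z => phi z * E (sqrt (u - a * (z * z)))) 0 z).
    unfold Rminus.
    repeat first
    [ apply continuity_2d_pt_id1 | apply continuity_2d_pt_id2 | apply continuity_2d_pt_const
    | apply continuity_1d_2d_pt_comp; [first [apply cpt_phi | apply cpt_E | apply cpt_sqrt] |]
    | apply continuity_2d_pt_mult | apply continuity_2d_pt_plus | apply continuity_2d_pt_opp ]. }
  rewrite DR.
  2:{ apply (ex_RInt_continuous (V:=R_CompleteNormedModule)). intros; apply HF. }
  assert (Hb : b = sqrt u * / sqrt a).
  { unfold b. rewrite sqrt_div_alt by exact ha. reflexivity. }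
  assert (Hbb : b * b = u / a).
  { unfold b. apply sqrt_sqrt. apply Rlt_le, Rdiv_lt_0_compat; assumption. }
  replace (- b) with (b * sin (- (PI / 2))) by (rewrite sin_neg, sin_PI2; ring).
  replace b with (b * sin (PI / 2)) at 2 by (rewrite sin_PI2; ring).
  rewrite <- (RInt_comp F (fun t => b * sin t) (fun t => b * cos t)).
  - unfold K. apply RInt_ext. intros t ht.
    rewrite Rmin_left, Rmax_right in ht by (pose PI_RGT_0; lra).
    unfold scal; simpl; unfold mult; simpl. unfold F, g.
    assert (hc : 0 <= cos t) by (apply cos_ge_0; lra).
    assert (Hs : u - a * (b * sin t * (b * sin t)) = u * (cos t * cos t)).
    { replace (a * (b * sin t * (b * sin t))) with (a * (b * b) * (sin t * sin t)) by ring.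
      rewrite Hbb. assert (H := sin2_cos2 t). unfold Rsqr in H.
      replace (a * (u / a) * (sin t * sin t)) with (u * (sin t * sin t)) by (field; lra).
      replace (cos t * cos t) with (1 - sin t * sin t) by lra. ring. }
    rewrite Hs, sqrt_mult, sqrt_square by (try apply Rmult_le_pos; lra).
    rewrite Hb. ring.
  - intros x _. apply HF.
  - intros x _. split.
    + auto_derive; [exact I|ring].
    + apply (ex_derive_continuous (K:=R_AbsRing) (V:=R_NormedModule)). auto_derive. exact I.
Qed.

Theorem mainTheorem11 (a : R) (ha : 0 < a) :
  forall x y t : R, 0 < x -> 0 < y -> 0 <= t <= 1 ->
    t * H_cdf a x + (1 - t) * H_cdf a y <= H_cdf a (t * x + (1 - t) * y).
Proof.
  intros x y t hx hy ht.
  assert (hz : 0 < t * x + (1 - t) * y).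
  { destruct (Rle_lt_dec t 0); nra. }
  rewrite !H_eq by assumption.
  apply (concave (fun u => K (/ sqrt a) (sqrt u)) (fun u => Kd (/ sqrt a) (sqrt u))); auto.
  - intros u hu. apply KS_deriv. exact hu.
  - intros u v hu huv. apply Kd_mono; auto.
    apply Rlt_le, Rinv_0_lt_compat, sqrt_lt_R0, ha.
Qed.
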